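(* Let $(x^*,y^* )$ be an optimal solution of the LP relaxation of forest cover on $(G,w)$, $G^*$ the subgraph with vertex set $\{i:x^*_i>0\}$ and edge set $\{(i,j):y^*_{ij}>0\}$, and $C=(V_C,E_C)$ any connected component of $G^*$ with at least one edge. Let $M$ be a minimum spanning tree of $C$ (w.r.t. $w$) computed by Kruskal's algorithm and $T=(V_T,E_T)$ the tree obtained from $M$ by deleting every degree-one vertex $i$ of $M$ with $x^*_i<1/2$ together with its incident edge. Then $$\sum_{i\in V_C}x^*_i-\sum_{(i,j)\in E_C}y^*_{ij}(1-w_{ij})\;\ge\;\frac12\Big[|V_T|-\sum_{(i,j)\in E_T}(1-w_{ij})\Big].$$
   Context: Graph $G=(V,E)$ with edge weights $w:E\to[0,1]$. For $S\subseteq V$, $E(S)$ denotes the edges with both endpoints in $S$. The LP relaxation of forest cover: minimize $\sum_{i\in V}x_i-\sum_{(i,j)\in E}y_{ij}(1-w_{ij})$ subject to $x_i+x_j\ge1$ and $x_i\ge y_{ij}$, $x_j\ge y_{ij}$ for all $(i,j)\in E$; $\sum_{i\in S}x_i-\sum_{(i,j)\in E(S)}y_{ij}\ge1$ for all $S\subseteq V$ with $E(S)\ne\emptyset$; $0\le x,y\le1$. *)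

(* Defs.v *)
From HB Require Import structures.
From mathcomp Require Import all_boot all_order all_algebra.
Set Implicit Arguments. Unset Strict Implicit. Unset Printing Implicit Defensive.
Import Order.TTheory GRing.Theory Num.Theory.
Local Open Scope ring_scope.

(* Graph conventions: vertex set is a finType V; an edge is an unordered
   pair {i,j} represented as a 2-element set; an edge set is F : {set {set V}}. *)

Section Defs.
Variables (R : realFieldType) (V : finType).

Definition adj (F : {set {set V}}) : rel V := fun i j => [set i; j] \in F.

Definition edges_in (F : {set {set V}}) (S : {set V}) : {set {set V}} :=
  [set f in F | f \subset S].

Definition simple_graph (E : {set {set V}}) : Prop :=
  forall f, f \in E -> #|f| = 2%N.

Definition fc_feasible (E : {set {set V}}) (x : V -> R) (y : {set V} -> R) : Prop :=
  [/\ forall i j, [set i; j] \in E ->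
        [/\ x i + x j >= 1, x i >= y [set i; j] & x j >= y [set i; j]],
      forall S : {set V}, edges_in E S != set0 ->
        \sum_(i in S) x i - \sum_(f in edges_in E S) y f >= 1,
      forall i, 0 <= x i <= 1
    & forall f, f \in E -> 0 <= y f <= 1].

Definition fc_obj (E : {set {set V}}) (w : {set V} -> R)
  (x : V -> R) (y : {set V} -> R) : R :=
  \sum_(i : V) x i - \sum_(f in E) y f * (1 - w f).

Definition fc_optimal E w x y : Prop :=
  fc_feasible E x y /\
  forall x' y', fc_feasible E x' y' -> fc_obj E w x y <= fc_obj E w x' y'.

Definition acyclic (F : {set {set V}}) : Prop :=
  forall c : seq V, uniq c -> (2 < size c)%N -> ~~ cycle (adj F) c.

Definition spanning_tree (VC : {set V}) (EC M : {set {set V}}) : Prop :=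
  [/\ M \subset EC,
      (forall i j, i \in VC -> j \in VC -> connect (adj M) i j)
    & acyclic M].

Definition weight (w : {set V} -> R) (F : {set {set V}}) : R := \sum_(f in F) w f.

Definition min_spanning_tree (w : {set V} -> R) (VC : {set V}) (EC M : {set {set V}}) : Prop :=
  spanning_tree VC EC M /\
  forall M', spanning_tree VC EC M' -> weight w M <= weight w M'.

Definition degree (F : {set {set V}}) (i : V) : nat := #|[set f in F | i \in f]|.

End Defs.

(* Main.v *)
Require Import Defs.
From HB Require Import structures.
From mathcomp Require Import all_boot all_order all_algebra.
From mathcomp Require Import zify.
Set Implicit Arguments. Unset Strict Implicit. Unset Printing Implicit Defensive.
Import Order.TTheory GRing.Theory Num.Theory.
Section Graph.
Variable V : finType.
Implicit Types (G F M : {set {set V}}) (S A B : {set V}).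

Definition simpleG G := forall f, f \in G -> #|f| = 2.

Lemma adj_sym G : symmetric (adj G).
Proof. by move=> i j; rewrite /adj setUC. Qed.

Lemma adj_irr G i : simpleG G -> adj G i i = false.
Proof.
move=> sG; apply/negP=> /sG; rewrite setUid cards1 //.
Qed.

Lemma adj_neq G i j : simpleG G -> adj G i j -> i != j.
Proof. by move=> sG h; apply/eqP=> eij; move: h; rewrite eij adj_irr. Qed.

Lemma adj_sub G G' : G \subset G' -> subrel (adj G) (adj G').
Proof. by move=> sub i j; rewrite /adj => /(subsetP sub). Qed.

Lemma connect_subG G G' i j : G \subset G' -> connect (adj G) i j -> connect (adj G') i j.
Proof. by move=> sub; apply: connect_sub => u v h; apply: connect1; apply: adj_sub h. Qed.

Lemma acyclic_sub G G' : G \subset G' -> acyclic G' -> acyclic G.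
Proof.
move=> sub ac c uq sz; apply/negP => cy.
by move: (ac c uq sz); rewrite (sub_cycle (adj_sub sub) cy).
Qed.

Lemma simpleG_sub G G' : G \subset G' -> simpleG G' -> simpleG G.
Proof. by move=> sub sG f /(subsetP sub) /sG. Qed.

Lemma edgeP G f : simpleG G -> f \in G -> exists i j, [/\ i != j, f = [set i; j] & adj G i j].
Proof.
move=> sG fG; have /cards2P [i [j [nij ef]]] : #|f| == 2 by rewrite sG.
by exists i, j; split=> //; rewrite /adj -ef.
Qed.

Lemma pair_eq (a b v : V) : [set a; v] = [set a; b] -> v = b.
Proof.
move=> e; have : v \in [set a; b] by rewrite -e !inE eqxx orbT.
rewrite !inE => /orP [/eqP va|/eqP //].
have : b \in [set a; v] by rewrite e !inE eqxx orbT.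
by rewrite !inE va orbb => /eqP ->.
Qed.

Lemma pair_mem (a b u v : V) : [set u; v] = [set a; b] -> (u = a /\ v = b) \/ (u = b /\ v = a).
Proof.
move=> e; have : u \in [set a; b] by rewrite -e !inE eqxx.
rewrite !inE => /orP [/eqP ua|/eqP ub].
  by left; split=> //; move: e; rewrite ua => /pair_eq.
by right; split=> //; apply: (@pair_eq b); rewrite [RHS]setUC -e ub.
Qed.

Lemma upathP (e : rel V) x y : connect e x y ->
  exists p, [/\ path e x p, uniq (x :: p) & last x p = y].
Proof.
by move/connectP=> [p pth ->]; case: (shortenP pth) => p' ? ? _; exists p'.
Qed.

Lemma last_in (x : V) q : q != [::] -> last x q \in q.
Proof. by case: q => // z q _ /=; apply: mem_last. Qed.

Lemma forest_cut G a b : simpleG G -> acyclic G -> [set a; b] \in G ->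
  ~~ connect (adj (G :\ [set a; b])) a b.
Proof.
move=> sG ac eG; apply/negP => /upathP [p [pth uq lst]].
have nab : a != b by apply: (adj_neq sG eG).
case: p pth uq lst => [|y q] pth uq lst; first by move: nab; rewrite -lst /= eqxx.
have : 2 < size (a :: y :: q).
  case: q pth uq lst => [|z q] //= pth _ lst.
  by move: pth; rewrite /= lst /adj !inE eqxx andbT.
move=> sz; move: (ac _ uq sz); rewrite /cycle rcons_path.
have -> : path (adj G) a (y :: q).
  by apply: sub_path pth => u v; apply: adj_sub; apply: subsetDl.
by rewrite lst /= /adj setUC eG.
Qed.

Lemma in_adjU1 e G u v : adj (e |: G) u v = ([set u; v] == e) || adj G u v.
Proof. by rewrite /adj !inE. Qed.

Lemma add_edge_acyclic G a b : acyclic G -> ~~ connect (adj G) a b ->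
  acyclic ([set a; b] |: G).
Proof.
move=> ac nc c uq sz; apply/negP => cy.
have avoid : {in predC1 a &, subrel (adj ([set a; b] |: G)) (adj G)}.
  move=> u v ua va; rewrite in_adjU1 => /orP [/eqP e|//].
  by case: (pair_mem e) => [[ua' _]|[_ va']]; [move: ua| move: va]; rewrite !inE ?ua' ?va' eqxx.
case ac_in: (a \in c); last first.
  have : all (predC1 a) c by apply/allP => u uc; rewrite !inE; apply/eqP => ua; move: ac_in; rewrite -ua uc.
  by move/(sub_in_cycle avoid)/(_ cy); rewrite (negbTE (ac c uq sz)).
case: (rot_to ac_in) => i p rc.
have uq' : uniq (a :: p) by rewrite -rc rot_uniq.
have sz' : 2 < size (a :: p) by rewrite -rc size_rot.
have cy' : cycle (adj ([set a; b] |: G)) (a :: p) by rewrite -rc rot_cycle.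
clear rc; case: p uq' sz' cy' => [|y q] // uq' sz' cy'.
move: cy'; rewrite /cycle rcons_path /= => /andP [/andP [s1 pq] sl].
have anq : a \notin y :: q by move: uq'; rewrite cons_uniq => /andP [].
have pq' : path (adj G) y q.
  apply: (sub_in_path avoid) pq; apply/allP => u uq2; rewrite !inE; apply/eqP => ua.
  by move: anq; rewrite -ua uq2.
have ly : last y q != a by apply/eqP => la; move: anq; rewrite -la mem_last.
move: s1 sl; rewrite !in_adjU1 => /orP [/eqP e1|g1] /orP [/eqP e2|g2].
- have yb : y = b by apply: (pair_eq e1).
  have lb : last y q = b by apply: (@pair_eq a); rewrite [LHS]setUC.
  have yq : y \notin q by move: uq' => /= /andP [_ /andP []].
  case: q {pq pq' ly anq uq' e2} sz' lb yq => [|z q] //= _ lb.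
  by rewrite yb -lb mem_last.
- have yb : y = b by apply: (pair_eq e1).
  move/negP: nc; apply; rewrite (sym_connect_sym (adj_sym G)) -yb.
  apply/connectP; exists (rcons q a); first by rewrite rcons_path pq' g2.
  by rewrite last_rcons.
- have : [set a; last y q] = [set a; b] by rewrite setUC.
  move/pair_eq => lb; move/negP: nc; apply; apply/connectP.
  by exists (y :: q); rewrite /= ?g1 ?pq' ?lb.
- by move: (ac _ uq' sz'); rewrite /cycle rcons_path /= g1 pq' g2.
Qed.

End Graph.
Section Forest.
Variable V : finType.
Implicit Types (G F M : {set {set V}}) (S A B : {set V}).

Lemma edge_at G f x : simpleG G -> f \in G -> x \in f ->
  exists w, f = [set x; w] /\ adj G x w.
Proof.
move=> sG fG xf; case: (edgeP sG fG) => [u [v [nuv ef a]]].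
move: xf; rewrite ef !inE => /orP [/eqP ->|/eqP ->]; first by exists v.
by exists u; rewrite setUC; split=> //; rewrite adj_sym.
Qed.

Definition chainb G S (c : seq V) :=
  [&& uniq c, all (mem S) c & (if c is x :: p then path (adj G) x p else true)].

Lemma chain_size G S c : chainb G S c -> size c <= #|S|.
Proof.
move=> /and3P [uq al _]; rewrite -(card_uniqP uq); apply: subset_leq_card.
by apply/subsetP => v; move/allP: al => al /al.
Qed.

Lemma forest_leaf G S : simpleG G -> acyclic G -> edges_in G S != set0 ->
  exists2 x, x \in S & #|[set f in edges_in G S | x \in f]| <= 1.
Proof.
move=> sG ac /set0Pn [f]; rewrite inE => /andP [fG fS].
case: (edgeP sG fG) => [i [j [nij ef aij]]].
pose P n := [exists t : n.-tuple V, chainb G S t].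
have P2 : P 2.
  apply/existsP; exists (in_tuple [:: i; j]) => /=.
  rewrite /chainb /= inE nij andbT aij andbT.
  by move/subsetP: fS => fS; rewrite !fS // ef !inE eqxx ?orbT.
have exP : exists n, P n by exists 2.
have ubP : forall n, P n -> n <= #|S|.
  by move=> n /existsP [t ct]; move: (chain_size ct); rewrite size_tuple.
case: (ex_maxnP exP ubP) => n Pn maxn.
case/existsP: Pn => t ct; have szt := size_tuple t.
have n2 : 2 <= n by apply: maxn.
move: ct szt; case: (tval t) => [|x [|y q]] //=; first by move=> _ e; move: n2; rewrite -e.
  by move=> _ e; move: n2; rewrite -e.
move=> ct szn; move: (ct) => /and3P [uq al pth].
exists x; first by move/allP: al; apply; rewrite inE eqxx.
have key : forall g, g \in edges_in G S -> x \in g -> g = [set x; y].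
  move=> g; rewrite inE => /andP [gG gS] xg.
  case: (edge_at sG gG xg) => z [eg axz].
  have zS : z \in S by move/subsetP: gS; apply; rewrite eg !inE eqxx orbT.
  rewrite eg; congr (_ |: _); congr [set _].
  apply/eqP; apply/negP => /negP nzy.
  case zc: (z \in x :: y :: q).
    have zx : z != x by rewrite eq_sym; apply: (adj_neq sG axz).
    have zq : z \in q by move: zc; rewrite !inE (negbTE zx) (negbTE nzy).
    case/splitPr: zq uq pth => q1 q2 uq pth.
    have sz : 2 < size (x :: y :: rcons q1 z) by rewrite /= size_rcons.
    have uq' : uniq (x :: y :: rcons q1 z).
      by move: uq; rewrite -cat_rcons -!cat_cons cat_uniq => /andP [].
    move: (ac _ uq' sz); rewrite /cycle rcons_path.
    move: pth; rewrite -cat_rcons -cat_cons cat_path => /andP [-> _] /=.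
    by rewrite last_rcons adj_sym axz.
  have : P (size (z :: x :: y :: q)).
    apply/existsP; exists (in_tuple (z :: x :: y :: q)) => /=.
    rewrite /chainb /= zc zS /= adj_sym axz.
    by move: ct; rewrite /chainb /= => /and3P [-> -> ->].
  by move/maxn; rewrite /= -szn ltnn.
apply: (@leq_trans #|[set [set x; y]]|); last by rewrite cards1.
apply: subset_leq_card; apply/subsetP => g; rewrite inE => /andP [g1 g2].
by rewrite inE (key g g1 g2).
Qed.

Lemma forest_edges G S : simpleG G -> acyclic G -> S != set0 ->
  #|edges_in G S| < #|S|.
Proof.
move=> sG ac; have [n] := ubnP #|S|; elim: n S => // n IH S /ltnSE Sle ne.
case e0: (edges_in G S == set0); first by rewrite (eqP e0) cards0 card_gt0.
case: (forest_leaf sG ac (negbT e0)) => x xS lx.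
have sub : edges_in G S \subset edges_in G (S :\ x) :|: [set f in edges_in G S | x \in f].
  apply/subsetP => f fE; move: (fE); rewrite inE => /andP [fG fS]; rewrite !inE fG fS /=.
  case xf: (x \in f); first by rewrite orbT.
  rewrite orbF; apply/subsetP => v vf.
  by rewrite !inE (subsetP fS) // andbT; apply/eqP => vx; move: xf; rewrite -vx vf.
have ne' : S :\ x != set0.
  case/set0Pn: (negbT e0) => f; rewrite inE => /andP [fG fS].
  case: (edgeP sG fG) => [u [v [nuv ef _]]].
  apply/set0Pn; case ux: (u == x).
    by exists v; rewrite !inE (subsetP fS) ?andbT; [rewrite -(eqP ux) eq_sym| rewrite ef !inE eqxx orbT].
  by exists u; rewrite !inE ux (subsetP fS) // ef !inE eqxx.
have cS : #|S| = (#|S :\ x|).+1 by rewrite (cardsD1 x S) xS.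
have IH' := IH (S :\ x) _ ne'.
rewrite cS in Sle; have {IH'} IH' := IH' Sle.
rewrite cS; apply: (leq_ltn_trans (subset_leq_card sub)).
apply: (leq_ltn_trans (leq_card_setU _ _)).
by rewrite -addSn; apply: (leq_trans (leq_add IH' lx)); rewrite addn1.
Qed.

Lemma conn_edges G B r : simpleG G -> r \in B ->
  (forall v, v \in B -> connect (adj G) v r) ->
  (forall u v, u \in B -> adj G u v -> v \in B) ->
  #|B| <= (#|edges_in G B|).+1.
Proof.
move=> sG rB conn clos.
pose Q v n := [exists t : n.-tuple V, path (adj G) v t && (last v t == r)].
pose d v := find (Q v) (iota 0 #|V|).
have hasQ : forall v, connect (adj G) v r -> has (Q v) (iota 0 #|V|).
  move=> v /upathP [p [pth uq lst]]; apply/hasP; exists (size p).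
    rewrite mem_iota /= add0n; move: (max_card (mem (v :: p))).
    by rewrite (card_uniqP uq).
  by apply/existsP; exists (in_tuple p); rewrite pth lst eqxx.
have dQ : forall v, connect (adj G) v r -> Q v (d v).
  move=> v cv; have h := hasQ v cv; have := nth_find 0 h.
  have lt : d v < #|V| by move: h; rewrite has_find size_iota.
  by rewrite nth_iota ?add0n.
have dmin : forall u n, Q u n -> n < #|V| -> d u <= n.
  move=> u n qn nV; rewrite leqNgt; apply/negP => ltn.
  by move: (before_find 0 ltn); rewrite nth_iota // add0n qn.
have parE : forall v, v \in B -> v != r -> exists u, adj G v u && (d u < d v).
  move=> v vB nvr; case/existsP: (dQ v (conn v vB)) => t /andP [pth /eqP lst].
  have szt := size_tuple t.
  move: pth lst szt; case: (tval t) => [|u t'] /=; first by move=> _ e; move: nvr; rewrite e eqxx.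
  move=> /andP [avu pth] lst szt; exists u; rewrite avu /=.
  have dvV : d v < #|V|.
    by move: (hasQ v (conn v vB)); rewrite has_find size_iota.
  apply: (@leq_ltn_trans (size t')); last by rewrite -szt.
  apply: dmin; last by rewrite (ltn_trans _ dvV) // -szt.
  by apply/existsP; exists (in_tuple t'); rewrite pth lst eqxx.
pose par v := odflt v [pick u | adj G v u && (d u < d v)].
have parP : forall v, v \in B -> v != r -> adj G v (par v) && (d (par v) < d v).
  move=> v vB nvr; rewrite /par; case: pickP => [u //|none].
  by case: (parE v vB nvr) => u; rewrite none.
pose phi v := [set v; par v].
have inj : {in B :\ r &, injective phi}.
  move=> v v'; rewrite !inE => /andP [nvr vB] /andP [nv'r v'B] e.
  case: (pair_mem e) => [[-> //]|[e1 e2]].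
  have h1 := parP v vB nvr; have h2 := parP v' v'B nv'r.
  move: h1 h2; rewrite e2 -e1 => /andP [_ l1] /andP [_ l2].
  by move: (ltn_trans l1 l2); rewrite ltnn.
have sub : phi @: (B :\ r) \subset edges_in G B.
  apply/subsetP => f /imsetP [v]; rewrite !inE => /andP [nvr vB] ->.
  have /andP [a _] := parP v vB nvr.
  apply/andP; split; first exact: a.
  apply/subsetP => z; rewrite !inE => /orP [/eqP -> //|/eqP ->].
  by apply: clos a.
rewrite (cardsD1 r B) rB add1n ltnS -(card_in_imset inj).
exact: subset_leq_card.
Qed.

End Forest.
Section Exchange.
Variable V : finType.
Implicit Types (G F M : {set {set V}}) (S A B : {set V}).

Lemma cross (e : rel V) (P : pred V) x p : P x -> ~~ P (last x p) -> path e x p ->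
  exists p1 b p2, [/\ p = p1 ++ b :: p2, P (last x p1), ~~ P b & e (last x p1) b].
Proof.
elim: p x => [|y q IH] x Px /=; first by rewrite Px.
move=> nPl /andP [exy pq]; case Py: (P y).
  case: (IH y Py nPl pq) => p1 [b [p2 [ep Pl nPb eb]]].
  by exists (y :: p1), b, p2; split=> //=; rewrite ep.
by exists [::], y, q; split=> //=; rewrite Py.
Qed.

Lemma avoid_step M a b : {in predC1 a &, subrel (adj M) (adj (M :\ [set a; b]))}.
Proof.
move=> u v ua va h; rewrite /adj in h *; rewrite !inE h andbT; apply/eqP => e.
by case: (pair_mem e) => [[ua' _]|[_ va']]; [move: ua| move: va]; rewrite !inE ?ua' ?va' eqxx.
Qed.

Lemma side M a b u : connect (adj M) u a ->
  connect (adj (M :\ [set a; b])) u a \/ connect (adj (M :\ [set a; b])) u b.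
Proof.
move=> /upathP [q [pth uq lst]].
case/lastP: q pth uq lst => [|q' z] /=; first by move=> _ _ ->; left; apply: connect0.
rewrite last_rcons => pth uq za; move: pth uq; rewrite za rcons_path => /andP [pq' al] uq.
have anq : a \notin u :: q'.
  move: uq; rewrite mem_rcons rcons_uniq !inE negb_or => /andP [/andP [ua _] /andP [aq _]].
  by rewrite negb_or eq_sym ua aq.
have pq'' : path (adj (M :\ [set a; b])) u q'.
  apply: (sub_in_path (@avoid_step M a b)) pq'; apply/allP => v vq; rewrite !inE.
  by apply/eqP => va; move: anq; rewrite -va vq.
have lna : last u q' != a by apply/eqP => la; move: anq; rewrite -la mem_last.
case e: ([set last u q'; a] == [set a; b]).
  right; apply/connectP; exists q' => //.
  by symmetry; apply: (@pair_eq _ a); rewrite [LHS]setUC (eqP e).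
left; apply/connectP; exists (rcons q' a); last by rewrite last_rcons.
by rewrite /adj in al; rewrite rcons_path pq'' /adj !inE e al.
Qed.

Local Open Scope ring_scope.
Lemma mst_cycle (R : realFieldType) (w : {set V} -> R) (VC : {set V}) (EC M : {set {set V}}) (t : R) (i j : V) :
  simpleG EC -> (forall g, g \in EC -> g \subset VC) ->
  min_spanning_tree w VC EC M -> [set i; j] \in EC -> w [set i; j] < t ->
  connect (adj [set g in M | w g < t]) i j.
Proof.
move=> sEC inVC [[MEC conn ac] minM] fEC wf; set F := [set g in M | w g < t].
apply/negPn/negP => nc.
have sM : simpleG M by apply: simpleG_sub MEC sEC.
have iVC : i \in VC by apply: (subsetP (inVC _ fEC)); rewrite !inE eqxx.
have jVC : j \in VC by apply: (subsetP (inVC _ fEC)); rewrite !inE eqxx orbT.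
case: (upathP (conn i j iVC jVC)) => p [pth uq lst].
have := @cross (adj M) (connect (adj F) i) i p (connect0 _ _).
rewrite lst => /(_ nc pth) [p1 [b [p2 [ep ca nb ab]]]].
set a := last i p1 in ca ab.
set e := [set a; b].
have eM : e \in M by [].
have we : t <= w e.
  rewrite leNgt; apply/negP => lt; move/negP: nb; apply.
  apply: (connect_trans ca); apply: connect1; rewrite /adj inE -/e eM; exact: lt.
have FMe : F \subset M :\ e.
  apply/subsetP => g; rewrite !inE => /andP [gM wg]; rewrite gM andbT.
  by apply/eqP => ge; move: wg; rewrite ge ltNge we.
have c_ia : connect (adj (M :\ e)) i a by apply: connect_subG FMe ca.
have anb : a \notin b :: p2.
  move: uq; rewrite ep -cat_cons cat_uniq => /and3P [_ h _].
  by apply/negP => ab2; move/hasP: h; apply; exists a => //; apply: mem_last.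
have c_bj : connect (adj (M :\ e)) b j.
  apply/connectP; exists p2.
    move: pth; rewrite ep cat_path => /andP [_ /= /andP [_ pb]].
    apply: (sub_in_path (@avoid_step M a b)) pb; apply/allP => v vq; rewrite !inE.
    by apply/eqP => va; move: anb; rewrite -va vq.
  by rewrite -lst ep last_cat.
have fM : [set i; j] \notin M.
  apply/negP => fM; move/negP: nc; apply; apply: connect1.
  by rewrite /adj inE fM wf.
set M' := [set i; j] |: (M :\ e).
have ncij : ~~ connect (adj (M :\ e)) i j.
  apply/negP => cij; move: (forest_cut sM ac eM); rewrite -/e => /negP; apply.
  rewrite (sym_connect_sym (adj_sym _)) in c_ia.
  by apply: (connect_trans c_ia); apply: (connect_trans cij); rewrite (sym_connect_sym (adj_sym _)).
have acM' : acyclic M'.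
  apply: add_edge_acyclic ncij; apply: acyclic_sub ac; exact: subsetDl.
have subM' : M :\ e \subset M' by apply: subsetUr.
have aVC : a \in VC by apply: (subsetP (inVC _ (subsetP MEC _ eM))); rewrite !inE eqxx.
have c_ab : connect (adj M') a b.
  apply: (@connect_trans _ _ i).
    rewrite (sym_connect_sym (adj_sym _)); exact: connect_subG subM' c_ia.
  apply: (@connect_trans _ _ j); first by apply: connect1; rewrite /adj !inE eqxx.
  rewrite (sym_connect_sym (adj_sym _)); exact: connect_subG subM' c_bj.
have c_ua : forall u, u \in VC -> connect (adj M') u a.
  move=> u uVC.
  case: (side b (conn u a uVC aVC)) => h; first by apply: connect_subG subM' h.
  apply: (connect_trans (connect_subG subM' h)).
  by rewrite (sym_connect_sym (adj_sym _)).
have stM' : spanning_tree VC EC M'.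
  split=> //.
    apply/subsetP => g; rewrite !inE => /orP [/eqP -> //|/andP [_ gM]].
    by apply: (subsetP MEC).
  move=> u v uVC vVC; apply: (connect_trans (c_ua u uVC)).
  by rewrite (sym_connect_sym (adj_sym _)); apply: c_ua.
have := minM M' stM'; rewrite /weight big_setU1 /=; last first.
  by rewrite !inE negb_and fM orbT.
rewrite (big_setD1 e eM) /= [w [set i; j] + _]addrC [w e + _]addrC lerD2l => wef.
by move: (lt_le_trans (le_lt_trans wef wf) we); rewrite ltxx.
Qed.

End Exchange.
From mathcomp Require Import ring lra.
Section Layer.
Local Open Scope ring_scope.
Variables (R : realFieldType) (T : finType).

Lemma layer (I : {set T}) (a c : T -> R) (K s : R) :
  0 <= s -> (forall i, i \in I -> 0 <= a i <= s) ->
  (forall tau, 0 <= K + \sum_(i in I | a i < tau) c i) ->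
  0 <= s * K + \sum_(i in I) c i * (s - a i).
Proof.
have [n] := ubnP #|I|; elim: n I s => // n IH I s /ltnSE Ile s0 aI hyp.
case: (set_0Vmem I) => [I0 | [i0 i0I]].
  rewrite I0 big_set0 addr0; apply: mulr_ge0 s0 _.
  by have := hyp 0; rewrite I0 big_pred0 ?addr0 // => i; rewrite in_set0.
case: (@arg_maxP _ _ _ i0 (mem I) a i0I) => m mI mmax0.
have mmax : forall j, j \in I -> a j <= a m by move=> j /mmax0.
set I' := [set i in I | a i != a m].
have I'lt : (#|I'| < #|I|)%N.
  apply: proper_card; apply/properP; split.
    by apply/subsetP => i; rewrite inE => /andP [].
  by exists m => //; rewrite inE eqxx andbF.
have am0 : 0 <= a m by case/andP: (aI m mI).
have ams : a m <= s by case/andP: (aI m mI).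
have hI' : 0 <= a m * K + \sum_(i in I') c i * (a m - a i).
  apply: IH => //.
  - by apply: (leq_trans I'lt).
  - move=> i; rewrite inE => /andP [iI _]; rewrite (mmax i iI) andbT.
    by case/andP: (aI i iI).
  - move=> tau; have := hyp (Order.min tau (a m)).
    rewrite (@eq_bigl _ _ _ _ _ (fun i => (i \in I) && (a i < Order.min tau (a m)))
                      (fun i => (i \in I') && (a i < tau))) //.
    move=> i; rewrite inE; case iI: (i \in I) => //=.
    by rewrite lt_min andbC lt_neqAle (mmax i iI) andbT.
have hall : 0 <= K + \sum_(i in I) c i.
  have := hyp (s + 1); rewrite (@eq_bigl _ _ _ _ _ _ (fun i => i \in I)) //.
  move=> i; case iI: (i \in I) => //=.
  by case/andP: (aI i iI) => _ h; apply: (le_lt_trans h); rewrite ltrDl ltr01.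
rewrite (bigID (fun i => a i == a m)) /=.
rewrite (@eq_bigr _ _ _ _ _ _ _ (fun i => c i * (s - a m))); last first.
  by move=> i /andP [_ /eqP ->].
rewrite -mulr_suml.
have eB : \sum_(i in I | a i != a m) c i * (s - a i) =
          \sum_(i in I') c i * (a m - a i) + (s - a m) * \sum_(i in I | a i != a m) c i.
  rewrite mulr_sumr (@eq_bigl _ _ _ _ _ (fun i => i \in I') (fun i => (i \in I) && (a i != a m))); last first.
    by move=> i; rewrite inE.
  by rewrite -big_split /=; apply: eq_bigr => i _; ring.
rewrite eB; move: hall; rewrite (bigID (fun i => a i == a m)) /= => hall.
have sm : 0 <= s - a m by rewrite subr_ge0.
have h3 := mulr_ge0 sm hall.
set SE := \sum_(i in I | a i == a m) c i in h3 *.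
set SN := \sum_(i in I | a i != a m) c i in h3 *.
set B' := \sum_(i in I') c i * (a m - a i) in hI' *.
nra.
Qed.
End Layer.
Lemma card_part (T J : finType) (A : {set T}) (R' : {set J}) (p : T -> J) :
  (forall u, u \in A -> p u \in R') -> #|A| = \sum_(j in R') #|[set u in A | p u == j]|.
Proof.
move=> h; rewrite -sum1_card (partition_big p (mem R')) //.
by apply: eq_bigr => j _; rewrite sum1dep_card.
Qed.

Section Main.
Local Open Scope ring_scope.
Variables (R : realFieldType) (V : finType).
Variables (E : {set {set V}}) (w : {set V} -> R) (x : V -> R) (y : {set V} -> R).
Variables (VC : {set V}) (EC M : {set {set V}}) (i0 : V).
Hypothesis sE : simpleG E.
Hypothesis wE : forall f, f \in E -> 0 <= w f <= 1.
Hypothesis feas : fc_feasible E x y.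
Hypothesis ECE : EC \subset E.
Hypothesis ECVC : forall g, g \in EC -> g \subset VC.
Hypothesis ECne : EC != set0.
Hypothesis mst : min_spanning_tree w VC EC M.

Definition L := [set i in VC | (degree M i == 1%N) && (x i < 1 / 2)].
Definition VT := VC :\: L.
Definition ET := edges_in M VT.

Lemma sEC : simpleG EC. Proof. exact: simpleG_sub ECE sE. Qed.
Lemma MEC : M \subset EC. Proof. by case: mst => [[]]. Qed.
Lemma sM : simpleG M. Proof. exact: simpleG_sub MEC sEC. Qed.
Lemma connM : forall i j, i \in VC -> j \in VC -> connect (adj M) i j.
Proof. by case: mst => [[]]. Qed.
Lemma acM : acyclic M. Proof. by case: mst => [[]]. Qed.
Lemma ME : M \subset E. Proof. exact: subset_trans MEC ECE. Qed.

Lemma adjM_VC u v : adj M u v -> (u \in VC) && (v \in VC).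
Proof.
move=> h; have := ECVC (subsetP MEC _ h) => /subsetP s.
by rewrite !s // !inE eqxx ?orbT.
Qed.

Lemma adjM_x u v : adj M u v -> 1 <= x u + x v.
Proof. by case: feas => vc _ _ _ h; case: (vc u v (subsetP ME _ h)). Qed.

Lemma x01 u : 0 <= x u <= 1. Proof. by case: feas. Qed.

Lemma y0 f : f \in E -> 0 <= y f.
Proof. by case: feas => _ _ _ h /h /andP []. Qed.

Lemma two_VC u : u \in VC -> exists2 v, v \in VC & v != u.
Proof.
move=> uVC; case/set0Pn: ECne => f fEC.
case: (edgeP sEC fEC) => [a [b [nab ef _]]].
have s := subsetP (ECVC fEC).
case au: (a == u).
  by exists b; [apply: s; rewrite ef !inE eqxx orbT| rewrite -(eqP au) eq_sym].
by exists a; [apply: s; rewrite ef !inE eqxx| rewrite au].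
Qed.

Lemma deg_pos u : u \in VC -> (0 < degree M u)%N.
Proof.
move=> uVC; case: (two_VC uVC) => v vVC nvu.
case/connectP: (connM uVC vVC) => [[|z p]] /=; first by move=> _ e; move: nvu; rewrite e eqxx.
move=> /andP [auz _] _; rewrite card_gt0; apply/set0Pn; exists [set u; z].
by rewrite inE; apply/andP; split; [exact: auz | rewrite !inE eqxx].
Qed.

Section Thr.
Variable t : R.
Definition F := [set g in M | w g < t].
Definition rt u := fingraph.root (adj F) u.
Definition iso u := ~~ [exists v, adj F u v].
Definition NT := [set u in VC | ~~ iso u].
Definition RNT := [set rt u | u in NT].
Definition RVC := [set rt u | u in VC].
Definition Bl (j : V) := [set u in VC | rt u == j].
Definition rep (f : {set V}) := odflt i0 [pick v in f].

Lemma rep_inM g : g \in M -> rep g \in g.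
Proof.
move=> gM; rewrite /rep; case: (edgeP sM gM) => [a [b [_ eg _]]]; case: pickP => [//|none].
by move: (none a); rewrite eg !inE eqxx.
Qed.

Lemma rep_inE g : g \in E -> rep g \in g.
Proof.
move=> gM; rewrite /rep; case: (edgeP sE gM) => [a [b [_ eg _]]]; case: pickP => [//|none].
by move: (none a); rewrite eg !inE eqxx.
Qed.

Lemma FM : F \subset M. Proof. by apply/subsetP => g; rewrite inE => /andP []. Qed.
Lemma sF : simpleG F. Proof. exact: simpleG_sub FM sM. Qed.
Lemma adjFM u v : adj F u v -> adj M u v. Proof. by move=> h; apply: (adj_sub FM). Qed.
Lemma csymF : connect_sym (adj F). Proof. exact: sym_connect_sym (adj_sym F). Qed.

Lemma connF_VC u v : connect (adj F) u v -> u \in VC -> v \in VC.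
Proof.
move=> c uVC; have cl : closed (adj F) (mem VC).
  by move=> a b /adjFM /adjM_VC /andP [-> ->].
by rewrite -(closed_connect cl c).
Qed.

Lemma iso_conn u v : iso u -> connect (adj F) u v -> v = u.
Proof.
move=> iu /connectP [[|z p]] //= /andP [a _] _.
by move: iu; rewrite /iso; case/existsP; exists z.
Qed.

Lemma rt_iso u : iso u -> rt u = u.
Proof. by move=> iu; apply: iso_conn iu _; apply: connect_root. Qed.

Lemma conn_niso u v : connect (adj F) u v -> u != v -> ~~ iso u.
Proof. by move=> c nuv; apply/negP => iu; move: nuv; rewrite (iso_conn iu c) eqxx. Qed.

Lemma rt_eq u v : (rt u == rt v) = connect (adj F) u v.
Proof. exact: root_connect csymF u v. Qed.

Lemma Bl_root j : j \in RVC -> j \in Bl j.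
Proof.
case/imsetP => u uVC ->; rewrite /Bl inE /rt (root_root csymF) eqxx andbT.
by apply: connF_VC uVC; apply: connect_root.
Qed.

Lemma Bl_conn j v : j \in RVC -> v \in Bl j -> connect (adj F) v j.
Proof.
case/imsetP => u uVC ->; rewrite /Bl inE => /andP [_ /eqP e].
by rewrite -e; apply: connect_root.
Qed.

Lemma Bl_closed j u v : u \in Bl j -> adj F u v -> v \in Bl j.
Proof.
rewrite /Bl !inE => /andP [uVC /eqP e] a.
have c : connect (adj F) u v by apply: connect1.
rewrite (connF_VC c uVC) /= -e eq_sym rt_eq; exact: c.
Qed.

Lemma Bl_edges j : j \in RVC -> (#|Bl j| <= (#|edges_in F (Bl j)|).+1)%N.
Proof.
move=> jR; apply: (conn_edges sF (Bl_root jR)) => [v|u v]; first exact: Bl_conn.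
exact: Bl_closed.
Qed.

Lemma TS (R' : {set V}) : R' \subset RVC ->
  (#|[set u in VC | rt u \in R']| <= #|edges_in F [set u in VC | rt u \in R']| + #|R'|)%N.
Proof.
move=> sub; set N' := [set u in VC | rt u \in R'].
have h1 : #|N'| = (\sum_(j in R') #|Bl j|)%N.
  rewrite (@card_part _ _ N' R' rt); last by move=> u; rewrite inE => /andP [].
  apply: eq_bigr => j jR; apply: eq_card => u; rewrite /Bl !inE.
  by case: eqP => [->|_]; rewrite ?jR ?andbT ?andbF.
have h2 : (\sum_(j in R') #|edges_in F (Bl j)| <= #|edges_in F N'|)%N.
  rewrite (@card_part _ _ (edges_in F N') R' (fun g => rt (rep g))); last first.
    move=> g; rewrite inE => /andP [gF gN].
    by move: (subsetP gN _ (rep_inM (subsetP FM _ gF))); rewrite inE => /andP [].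
  apply: leq_sum => j jR; apply: subset_leq_card; apply/subsetP => g.
  rewrite !inE => /andP [gF gB]; rewrite gF /=.
  have gN : g \subset N'.
    apply: (subset_trans gB); apply/subsetP => u; rewrite !inE => /andP [-> /eqP ->].
    by rewrite jR.
  rewrite gN /=; case/andP: (gF) => gM _; have := rep_inM gM.
  by move/(subsetP gB); rewrite inE => /andP [].
rewrite h1; apply: (leq_trans _ (leq_add h2 (leqnn _))).
rewrite -[#|R'|]sum1_card -big_split /=; apply: leq_sum => j jR.
by rewrite addn1; apply: Bl_edges; apply: (subsetP sub).
Qed.

Lemma sum_sub_le (T : finType) (P Q : pred T) (g : T -> R) :
  (forall i, P i -> Q i) -> (forall i, Q i -> 0 <= g i) ->
  \sum_(i | P i) g i <= \sum_(i | Q i) g i.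
Proof.
move=> PQ g0; rewrite [leRHS](bigID P) /=.
have -> : \sum_(i | Q i && P i) g i = \sum_(i | P i) g i.
  by apply: eq_bigl => i; case Pi: (P i); rewrite ?andbT ?andbF // PQ.
by rewrite lerDl; apply: sumr_ge0 => i /andP [qi _]; apply: g0.
Qed.

Lemma ECL_rt f u : f \in EC -> w f < t -> u \in f -> rt u = rt (rep f).
Proof.
move=> fEC wf uf; case: (edgeP sEC fEC) => [a [b [nab ef _]]].
have c : connect (adj F) a b by apply: (mst_cycle sEC ECVC mst); rewrite -ef.
have rf := rep_inE (subsetP ECE _ fEC).
have rab : rt a = rt b by apply/eqP; rewrite rt_eq.
move: uf rf; rewrite ef !inE => /orP [/eqP ->|/eqP ->] /orP [/eqP ->|/eqP ->] //.
Qed.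

Lemma ECL_niso f u : f \in EC -> w f < t -> u \in f -> ~~ iso u.
Proof.
move=> fEC wf uf; case: (edgeP sEC fEC) => [a [b [nab ef _]]].
have c : connect (adj F) a b by apply: (mst_cycle sEC ECVC mst); rewrite -ef.
move: uf; rewrite ef !inE => /orP [/eqP ->|/eqP ->]; first exact: conn_niso c nab.
by rewrite csymF in c; apply: conn_niso c _; rewrite eq_sym.
Qed.

Lemma NT_rt u : u \in VC -> rt u \in RNT -> u \in NT.
Proof.
move=> uVC /imsetP [v vNT /eqP]; rewrite rt_eq => c.
rewrite inE uVC /=; case: (eqVneq u v) => [->|nuv]; first by move: vNT; rewrite inE => /andP [].
exact: conn_niso c nuv.
Qed.

Lemma partA : (#|RNT|%:R : R) <= \sum_(u in NT) x u - \sum_(f in EC | w f < t) y f.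
Proof.
rewrite (partition_big rt (mem RNT)); last by move=> u uNT; apply: imset_f.
rewrite [X in _ - X](partition_big (fun f => rt (rep f)) (mem RNT)); last first.
  move=> f /andP [fEC wf]; apply/imsetP; exists (rep f) => //.
  have rf := rep_inE (subsetP ECE _ fEC).
  by rewrite inE (subsetP (ECVC fEC) _ rf) (ECL_niso fEC wf rf).
rewrite -sumrB -[X in X <= _]mulr1n -sumr_const; apply: ler_sum => j jR.
case/imsetP: (jR) => v vNT ej.
have vVC : v \in VC by move: vNT; rewrite inE => /andP [].
have jRVC : j \in RVC by rewrite ej; apply: imset_f.
have eX : \sum_(u in NT | rt u == j) x u = \sum_(u in Bl j) x u.
  apply: eq_bigl => u; rewrite /Bl !inE; case: (eqVneq (rt u) j) => [e|]; rewrite ?andbT ?andbF //.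
  case uVC: (u \in VC) => //=.
  have h : u \in NT by apply: NT_rt uVC _; rewrite e.
  by move: h; rewrite inE uVC.
rewrite eX.
have ne : edges_in E (Bl j) != set0.
  move: vNT; rewrite inE => /andP [_ /negPn /existsP [z avz]].
  apply/set0Pn; exists [set v; z]; rewrite inE; apply/andP; split.
    by apply: (subsetP ME); apply: adjFM.
  have vB : v \in Bl j by rewrite /Bl inE vVC ej eqxx.
  by apply/subsetP => u /set2P [->|->] //; apply: Bl_closed vB avz.
case: feas => _ hS _ _; have := hS _ ne => h1.
apply: (le_trans h1); rewrite lerD2l lerN2.
apply: sum_sub_le => [f /andP [/andP [fEC wf] /eqP e]|f]; last first.
  by rewrite inE => /andP [fE _]; apply: y0.
rewrite inE (subsetP ECE _ fEC) /=; apply/subsetP => u uf.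
rewrite /Bl inE (subsetP (ECVC fEC) _ uf) /= (ECL_rt fEC wf uf) e eqxx //.
Qed.

Lemma partB : (#|NT| <= #|F| + #|RNT|)%N.
Proof.
have sub : RNT \subset RVC.
  apply/subsetP => j /imsetP [v vNT ->]; apply: imset_f.
  by move: vNT; rewrite inE => /andP [].
have := TS sub.
have -> : [set u in VC | rt u \in RNT] = NT.
  apply/setP => u; rewrite inE; case uVC: (u \in VC) => /=; last first.
    by rewrite inE uVC.
  apply/idP/idP; first exact: NT_rt.
  by move=> uNT; apply: imset_f.
move=> h; apply: (leq_trans h); rewrite leq_add2r; apply: subset_leq_card.
by apply/subsetP => g; rewrite inE => /andP [].
Qed.

Lemma partC : (#|F| <= #|[set g in ET | (w g < t)%R]| + #|NT :&: L|)%N.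
Proof.
set ETL := [set g in ET | w g < t].
set H' := [set g in F | [exists z in L, z \in g]].
have sub : F \subset ETL :|: H'.
  apply/subsetP => g gF; rewrite in_setU; apply/orP.
  case ex: [exists z in L, z \in g]; first by right; rewrite inE gF ex.
  left; move: (gF); rewrite inE => /andP [gM wg].
  rewrite inE wg andbT /ET inE gM /=; apply/subsetP => u ug.
  rewrite /VT in_setD (subsetP (ECVC (subsetP MEC _ gM)) _ ug) andbT.
  by apply/negP => uL; move/negbT/negP: ex; apply; apply/existsP; exists u; rewrite uL ug.
pose phi (g : {set V}) := odflt i0 [pick z in L | z \in g].
have phiP : forall g, g \in H' -> (phi g \in L) && (phi g \in g).
  move=> g; rewrite inE => /andP [_ /existsP [z /andP [zL zg]]].
  rewrite /phi; case: pickP => [v /andP [-> ->] //|none].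
  by move: (none z); rewrite zL zg.
have inj : {in H' &, injective phi}.
  move=> g1 g2 h1 h2 e.
  have /andP [zL z1] := phiP _ h1; have /andP [_ z2] := phiP _ h2.
  rewrite -e in z2.
  have g1M : g1 \in M by move: h1; rewrite !inE => /andP [/andP []].
  have g2M : g2 \in M by move: h2; rewrite !inE => /andP [/andP []].
  move: zL; rewrite inE => /andP [_ /andP [/cards1P [g0 eg] _]].
  have : g1 \in [set f in M | phi g1 \in f] by rewrite inE g1M z1.
  have : g2 \in [set f in M | phi g1 \in f] by rewrite inE g2M z2.
  by rewrite eg !inE => /eqP -> /eqP ->.
have cH : (#|H'| <= #|NT :&: L|)%N.
  rewrite -(card_in_imset inj); apply: subset_leq_card; apply/subsetP => z.
  case/imsetP => g gH ->; have /andP [zL zg] := phiP _ gH.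
  rewrite in_setI zL andbT inE; move: (zL); rewrite inE => /andP [-> _] /=.
  move: gH; rewrite inE => /andP [gF _].
  case: (edge_at sF gF zg) => v [_ a]; rewrite /iso negbK; apply/existsP; exists v; exact: a.
apply: (leq_trans (subset_leq_card sub)); apply: (leq_trans (leq_card_setU _ _)).
by rewrite leq_add2l.
Qed.

Definition Iso := [set u in VC | iso u && (u \in VT)].

Lemma LoCount tau :
  (#|[set u in Iso | (x u < 1/2)%R && (x u < tau)%R]| <=
   #|RNT| + #|[set u in Iso | ~~ (x u < 1/2)%R && (1 - x u < tau)%R]|)%N.
Proof.
set Lo := [set u in Iso | _]; set Hi := [set u in Iso | _].
case: (set_0Vmem Lo) => [-> | [l0 l0Lo]]; first by rewrite cards0.
have LoP : forall l, l \in Lo -> [/\ l \in VC, iso l, l \in VT, x l < 1/2 & x l < tau].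
  by move=> l; rewrite /Lo /Iso !inE => /andP [/andP [-> /andP [-> ->]] /andP [-> ->]].
have nbP : forall l v, l \in Lo -> adj M l v -> [/\ v \in VC, 1/2 < x v & 1 - x v < tau].
  move=> l v lLo a; case: (LoP l lLo) => _ _ _ lx lt.
  have h := adjM_x a; have /andP [_ ->] := adjM_VC a.
  split=> //; [lra | lra].
have lowM : forall l1 l2 g, l1 \in Lo -> l2 \in Lo -> g \in M -> l1 \in g -> l2 \in g -> l1 = l2.
  move=> l1 l2 g h1 h2 gM i1 i2; case: (edge_at sM gM i1) => v [eg a].
  move: i2; rewrite eg !inE => /orP [/eqP -> //|/eqP ev].
  case: (nbP _ _ h1 a) => _ xv _; case: (LoP _ h2) => _ _ _ x2 _.
  by move: xv; rewrite -ev => xv; move: (lt_trans xv x2); rewrite ltxx.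
have degP : forall l, l \in Lo -> (2 <= degree M l)%N.
  move=> l lLo; case: (LoP l lLo) => lVC _ lVT lx _.
  have d0 := deg_pos lVC.
  have : degree M l != 1%N.
    apply/eqP => d1; move: lVT; rewrite /VT in_setD => /andP [/negP nL _]; apply: nL.
    by rewrite /L inE lVC d1 eqxx lx.
  by case: (degree M l) d0 => [|[|n]].
set Nb := [set v | [exists l in Lo, adj M l v]].
set NbI := [set v in Nb | iso v].
set NbN := [set v in Nb | ~~ iso v].
set R' := [set rt v | v in NbN].
set N' := [set u in VC | rt u \in R'].
set S := Lo :|: NbI :|: N'.
set H := [set g in M | [exists l in Lo, l \in g]].
have NbP : forall v, v \in Nb -> exists2 l, l \in Lo & adj M l v.
  by move=> v; rewrite inE => /existsP [l /andP [? ?]]; exists l.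
have NbIHi : NbI \subset Hi.
  apply/subsetP => v; rewrite inE => /andP [vNb iv]; case: (NbP v vNb) => l lLo a.
  case: (nbP l v lLo a) => vVC xv tv.
  rewrite /Hi /Iso !inE vVC iv tv andbT /=.
  have nx : ~~ (x v < 1/2) by rewrite -leNgt; apply: ltW.
  by rewrite nx /= (negbTE nx) andbF.
have R'RNT : R' \subset RNT.
  apply/subsetP => j /imsetP [v vN ->]; apply: imset_f.
  move: vN; rewrite inE => /andP [vNb nv]; case: (NbP v vNb) => l lLo a.
  by case: (nbP l v lLo a) => vVC _ _; rewrite inE vVC nv.
have R'RVC : R' \subset RVC.
  apply/subsetP => j /imsetP [v vN ->]; apply: imset_f.
  move: vN; rewrite inE => /andP [vNb nv]; case: (NbP v vNb) => l lLo a.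
  by case: (nbP l v lLo a).
have hTS := TS R'RVC; rewrite -/N' in hTS.
have HS : H \subset edges_in M S.
  apply/subsetP => g; rewrite inE => /andP [gM /existsP [l /andP [lLo lg]]].
  rewrite inE gM /=; case: (edge_at sM gM lg) => v [eg a].
  rewrite eg; apply/subsetP => u /set2P [->|->]; first by rewrite /S !in_setU lLo.
  have vNb : v \in Nb by rewrite inE; apply/existsP; exists l; rewrite lLo.
  rewrite /S !in_setU; case iv: (iso v).
    by rewrite /NbI inE vNb iv orbT.
  case: (nbP l v lLo a) => vVC _ _.
  apply/orP; right; rewrite /N' inE vVC /=; apply: imset_f.
  by rewrite inE vNb iv.
have FS : edges_in F N' \subset edges_in M S.
  apply/subsetP => g; rewrite inE => /andP [gF gN]; rewrite inE (subsetP FM _ gF) /=.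
  by apply: (subset_trans gN); apply/subsetP => u uN; rewrite /S in_setU uN orbT.
have dis : [disjoint H & edges_in F N'].
  rewrite -setI_eq0; apply/eqP/setP => g; rewrite in_set0 in_setI.
  apply/negP => /andP [gH gF]; move: gH; rewrite inE => /andP [_ /existsP [l /andP [lLo lg]]].
  move: gF; rewrite inE => /andP [gF _]; case: (edge_at sF gF lg) => v [_ a].
  case: (LoP l lLo) => _ il _ _ _; move: il; rewrite /iso => /negP; apply.
  by apply/existsP; exists v.
have cHF : (#|H| + #|edges_in F N'| <= #|edges_in M S|)%N.
  rewrite -(leq_card_setU H (edges_in F N')) in dis.
  by rewrite -(eqP dis); apply: subset_leq_card; rewrite subUset HS FS.
have cH : (2 * #|Lo| <= #|H|)%N.
  pose p (g : {set V}) := odflt i0 [pick l in Lo | l \in g].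
  have pP : forall g, g \in H -> (p g \in Lo) && (p g \in g).
    move=> g; rewrite inE => /andP [_ /existsP [l /andP [lLo lg]]].
    rewrite /p; case: pickP => [v /andP [-> ->] //|none].
    by move: (none l); rewrite lLo lg.
  rewrite (@card_part _ _ H Lo p); last by move=> g /pP /andP [].
  rewrite mulnC -sum_nat_const; apply: leq_sum => l lLo.
  apply: (leq_trans (degP l lLo)); apply: subset_leq_card; apply/subsetP => g.
  rewrite inE => /andP [gM lg].
  have gH : g \in H by rewrite inE gM; apply/existsP; exists l; rewrite lLo lg.
  rewrite inE gH /=; have /andP [pL pg] := pP g gH.
  by rewrite (lowM _ _ _ pL lLo gM pg lg).
have Sne : S != set0 by apply/set0Pn; exists l0; rewrite /S !in_setU l0Lo.
have fe := forest_edges sM acM Sne.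
have cS : (#|S| <= #|Lo| + #|NbI| + #|N'|)%N.
  apply: (leq_trans (leq_card_setU _ _)); rewrite leq_add2r.
  exact: leq_card_setU.
have c1 := subset_leq_card NbIHi.
have c2 := subset_leq_card R'RNT.
lia.
Qed.

Lemma partD : 0 <= (#|RNT|%:R : R) / 2 + \sum_(u in Iso) (x u - 1/2).
Proof.
pose a u := if x u < 1/2 then x u else 1 - x u.
pose c u : R := if x u < 1/2 then -1 else 1.
have H := @layer R V Iso a c (#|RNT|%:R) (1/2).
have eS : \sum_(i in Iso) c i * (1 / 2 - a i) = \sum_(u in Iso) (x u - 1/2).
  apply: eq_bigr => u _; rewrite /a /c; case: (x u < 1/2); rewrite /=; lra.
have hs : (0 : R) <= 1/2 by lra.
have ha : forall u, u \in Iso -> 0 <= a u <= 1/2.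
  move=> u _; rewrite /a; have /andP [h0 h1] := x01 u; case: ifP => h; apply/andP; split; lra.
suff hc : forall tau, 0 <= #|RNT|%:R + \sum_(u in Iso | a u < tau) c u.
  by have := H hs ha hc; rewrite eS => h; lra.
move=> tau.
have e1 : \sum_(u in Iso | a u < tau) c u =
    \sum_(u in [set u in Iso | (x u >= 1/2) && (1 - x u < tau)]) 1
  - \sum_(u in [set u in Iso | (x u < 1/2) && (x u < tau)]) 1.
  rewrite (bigID (fun u => x u < 1/2)) /= addrC; congr (_ + _).
    apply: eq_big => u; rewrite ?inE /a /c.
      by rewrite leNgt; case: (x u < 1/2); rewrite ?andbF ?andbT.
    by move=> /andP [_ /negbTE ->].
  rewrite -sumrN; apply: eq_big => u; rewrite ?inE /a /c.
    by case: (x u < 1/2); rewrite ?andbF ?andbT.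
  by move=> /andP [_ ->].
rewrite e1 !sumr_const.
have := LoCount tau.
set n1 := #|[set u in Iso | _ && _]|; set n2 := #|[set u in Iso | _ && _]|.
have -> : #|[set u in Iso | (1/2 <= x u) && (1 - x u < tau)]| = n2.
  by apply: eq_card => u; rewrite !inE -leNgt.
move=> h; have : (n1%:R : R) <= (#|RNT| + n2)%:R by rewrite ler_nat.
rewrite natrD => h'.
have -> : (1 : R) *+ n2 = n2%:R by [].
have -> : (1 : R) *+ n1 = n1%:R by [].
lra.
Qed.

Lemma cardEq : (#|VT| + #|NT :&: L| = #|NT| + #|Iso|)%N.
Proof.
rewrite -(cardsID NT VT) -(cardsID VT NT) setIC.
have -> : VT :\: NT = Iso.
  apply/setP => u; rewrite /VT /Iso /NT !inE.
  by case: (u \in VC); case: (iso u); case: (degree M u == 1%N); case: (x u < 1/2).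
have -> : NT :\: VT = NT :&: L.
  apply/setP => u; rewrite /VT /NT !inE.
  by case: (u \in VC); case: (iso u); case: (degree M u == 1%N); case: (x u < 1/2).
by rewrite -!addnA [(#|Iso| + _)%N]addnC.
Qed.

Lemma thr : 0 <= (\sum_(u in VC) x u - 1/2 * #|VT|%:R) +
   \sum_(f in EC | w f < t) (- y f + (if f \in ET then 1/2 else 0)).
Proof.
set ETL := [set g in ET | w g < t].
have eY : \sum_(f in EC | w f < t) (- y f + (if f \in ET then 1/2 else 0)) =
   - \sum_(f in EC | w f < t) y f + 1/2 * #|ETL|%:R.
  rewrite big_split /= sumrN; congr (_ + _).
  rewrite (bigID (fun f => f \in ET)) /=.
  rewrite [X in _ + X]big1 ?addr0; last by move=> f /andP [_ /negbTE ->].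
  rewrite (@eq_bigr _ _ _ _ _ _ _ (fun _ => 1/2)); last by move=> f /andP [_ ->].
  rewrite (@eq_bigl _ _ _ _ _ _ (fun f => f \in ETL)); last first.
    move=> f; rewrite /ETL [in RHS]inE; case fET: (f \in ET); rewrite ?andbF ?andbT //=.
    have : f \in EC by apply: (subsetP MEC); move: fET; rewrite /ET inE => /andP [].
    by move=> ->.
  by rewrite sumr_const mulr_natr mulrC.
have eX : \sum_(u in VC) x u = \sum_(u in NT) x u + \sum_(u in VC | iso u) x u.
  rewrite (bigID iso) /= addrC; congr (_ + _).
  by apply: eq_bigl => u; rewrite inE.
have hI : \sum_(u in Iso) x u <= \sum_(u in VC | iso u) x u.
  apply: sum_sub_le => [u|u _]; last by case/andP: (x01 u).
  by rewrite inE => /andP [-> /andP [-> _]].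
have hA := partA.
have hB : (#|NT|%:R : R) <= #|F|%:R + #|RNT|%:R by rewrite -natrD ler_nat partB.
have hC : (#|F|%:R : R) <= #|ETL|%:R + #|NT :&: L|%:R by rewrite -natrD ler_nat partC.
have hD := partD.
have hE : (#|VT|%:R : R) + #|NT :&: L|%:R = #|NT|%:R + #|Iso|%:R by rewrite -!natrD cardEq.
have eI : \sum_(u in Iso) (x u - 1/2) = \sum_(u in Iso) x u - 1/2 * #|Iso|%:R.
  by rewrite sumrB sumr_const mulr_natr mulrC.
rewrite eY eX; rewrite eI in hD; lra.
Qed.

End Thr.

Lemma ETEC : ET \subset EC.
Proof. by apply: (subset_trans _ MEC); apply/subsetP => g; rewrite inE => /andP []. Qed.

Lemma main_ineq : 1 / 2 * (#|VT|%:R - \sum_(f in ET) (1 - w f)) <=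
  \sum_(i in VC) x i - \sum_(f in EC) y f * (1 - w f).
Proof.
pose c f := - y f + (if f \in ET then 1/2 else 0).
have := @layer R _ EC w c (\sum_(u in VC) x u - 1/2 * #|VT|%:R) 1 ler01 _ _.
have wEC : forall f, f \in EC -> 0 <= w f <= 1 by move=> f /(subsetP ECE); apply: wE.
move=> /(_ wEC) /(_ thr).
have e : \sum_(f in EC) c f * (1 - w f) =
  - \sum_(f in EC) y f * (1 - w f) + 1/2 * \sum_(f in ET) (1 - w f).
  rewrite /c (eq_bigr (fun f => - (y f * (1 - w f)) + (if f \in ET then 1/2 * (1 - w f) else 0))); last first.
    by move=> f _; case: (f \in ET); ring.
  rewrite big_split /= sumrN; congr (_ + _).
  rewrite -big_mkcondr /= mulr_sumr.
  apply: eq_bigl => f; case fET: (f \in ET); rewrite ?andbT ?andbF //.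
  by rewrite (subsetP ETEC _ fET).
rewrite e mul1r => h; lra.
Qed.

End Main.

Local Open Scope ring_scope.

Theorem mainTheorem8 (R : realFieldType) (V : finType)
  (E : {set {set V}}) (w : {set V} -> R) (x : V -> R) (y : {set V} -> R)
  (i0 : V) (M : {set {set V}}) :
  simple_graph E ->
  (forall f, f \in E -> 0 <= w f <= 1) ->
  fc_optimal E w x y ->
  let Vstar := [set i | x i > 0] in
  let Estar := [set f in E | y f > 0] in
  i0 \in Vstar ->
  let VC := [set j | connect (adj Estar) i0 j] in
  let EC := edges_in Estar VC in
  EC != set0 ->
  min_spanning_tree w VC EC M ->
  let L := [set i in VC | (degree M i == 1%N) && (x i < 1 / 2)] in
  let VT := VC :\: L in
  let ET := edges_in M VT in
  \sum_(i in VC) x i - \sum_(f in EC) y f * (1 - w f)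
    >= 1 / 2 * (#|VT|%:R - \sum_(f in ET) (1 - w f)).
Proof.
move=> sE wE [feas _] Vstar Estar _ VC EC ECne mst.
have ECE : EC \subset E.
  by apply/subsetP => g; rewrite !inE => /andP [/andP [] ].
have ECVC : forall g, g \in EC -> g \subset VC by move=> g; rewrite inE => /andP [].
exact: (@main_ineq R V E w x y VC EC M i0 sE wE feas ECE ECVC ECne mst).
Qed.
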